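(* Suppose the weight sequence $\mathbf{w}$ has type II or III. Then there is a sequence $t_n\to0$ such that $\Pr{\tilde D_n\le(1-\mu+t_n)n}\to1$ as $n\to\infty$; that is, $\tilde D_n\le(1-\mu+o(1))n$ with probability tending to $1$.
   Context: A weight sequence $\mathbf{w}=(\omega_k)_{k\ge0}$ consists of non-negative reals with $\omega_0>0$ and $\omega_k>0$ for some $k\ge2$; $\mathcal{T}_n$ is the random plane tree with $n$ vertices drawn with probability proportional to $\prod_v\omega_{d^+(v)}$ ($n\equiv1\bmod\gcd\{i:\omega_i>0\}$), with root $o$. Let $\phi(z)=\sum_k\omega_kz^k$ with radius $\rho_\phi$, $\psi(t)=t\phi'(t)/\phi(t)$, $\nu=\lim_{t\nearrow\rho_\phi}\psi(t)$ when $\rho_\phi>0$. Type II: $\rho_\phi>0$, $0<\nu<1$, $\tau=\rho_\phi$. Type III: $\rho_\phi=0$, $\tau=\nu=0$. $\xi$ has law $\Pr{\xi=k}=\tau^k\omega_k/\phi(\tau)$, and $\mu=\mathbb{E}\xi=\min(\nu,1)$ (so $\mu=\nu$ in types II/III). Let $N_k$ be the number of vertices of $\mathcal{T}_n$ with outdegree $k$. $(\Omega_n)$ is a fixed deterministic sequence with $\Omega_n\to\infty$, $\Omega_n=o(n)$, such that for every $K_n\to\infty$ with $K_n\le\Omega_n$: $\sum_{k\le K_n}kN_k=\mu n+o_p(n)$ and $\sum_{k>K_n}kN_k=(1-\mu)n+o_p(n)$. $\tilde D_n$ is a random integer with the law of $d^+_{\mathcal{T}_n}(o)$ conditioned on $d^+_{\mathcal{T}_n}(o)>\Omega_n$.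 *)

(* Defs.v *)
From Stdlib Require Import Reals List Lia ClassicalEpsilon.
Import ListNotations.
Open Scope R_scope.

(** Plane (ordered, rooted) trees: a vertex with its ordered list of children. *)
Inductive ptree : Type := Node : list ptree -> ptree.

Definition outdeg (t : ptree) : nat := match t with Node ts => length ts end.

Fixpoint tsize (t : ptree) : nat :=
  match t with
  | Node ts => S ((fix f (l : list ptree) : nat :=
                     match l with [] => 0%nat | u :: r => (tsize u + f r)%nat end) ts)
  end.

Fixpoint tweight (w : nat -> R) (t : ptree) : R :=
  match t with
  | Node ts => w (length ts) *
      ((fix f (l : list ptree) : R :=
          match l with [] => 1 | u :: r => tweight w u * f r end) ts)
  end.

Fixpoint Ncount (k : nat) (t : ptree) : nat :=
  match t with
  | Node ts => ((if Nat.eqb (length ts) k then 1 else 0) +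
      (fix f (l : list ptree) : nat :=
         match l with [] => 0%nat | u :: r => (Ncount k u + f r)%nat end) ts)%nat
  end.

(** Enumeration of all plane forests with m vertices in total (fuel-based);
    the first tree has j vertices (1 <= j <= m), its children form a forest
    of j-1 vertices, and the remaining trees a forest of m-j vertices. *)
Fixpoint forests_f (fuel m : nat) : list (list ptree) :=
  match fuel with
  | O => []
  | S fu =>
      match m with
      | O => [ [] ]
      | S _ =>
          flat_map (fun j =>
            flat_map (fun f1 => map (fun rest => Node f1 :: rest) (forests_f fu (m - j)))
                     (forests_f fu (j - 1)))
          (seq 1 m)
      end
  end.

Definition forests (m : nat) : list (list ptree) := forests_f (S m) m.

Definition trees (n : nat) : list ptree :=
  match n with O => [] | S m => map Node (forests m) end.

(** Unnormalised weight of an event P for T_n: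
    sum over plane trees t with n vertices satisfying P of prod_v w_{d^+(v)}.
    Pr(T_n in P) = Wsum w n P / Wsum w n (fun _ => True). *)
Definition Wsum (w : nat -> R) (n : nat) (P : ptree -> Prop) : R :=
  fold_right Rplus 0
    (map (fun t => if excluded_middle_informative (P t) then tweight w t else 0)
         (trees n)).

Definition low_sum (K : nat) (t : ptree) : R :=
  fold_right Rplus 0 (map (fun k => INR k * INR (Ncount k t)) (seq 0 (S K))).

(** sum_{k > K} k N_k  (only k with K < k <= K + |t| can contribute, since
    outdegrees are < |t|; the sum ranges over K+1 .. K+|t|). *)
Definition high_sum (K : nat) (t : ptree) : R :=
  fold_right Rplus 0 (map (fun k => INR k * INR (Ncount k t)) (seq (S K) (tsize t))).

Definition weight_seq (w : nat -> R) : Prop :=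
  (forall k, 0 <= w k) /\ 0 < w 0%nat /\ exists k, (2 <= k)%nat /\ 0 < w k.

Definition phi_conv (w : nat -> R) (t : R) : Prop :=
  exists l, infinite_sum (fun k => w k * t ^ k) l.

Definition is_radius (w : nat -> R) (rho : R) : Prop :=
  (forall t, 0 <= t < rho -> phi_conv w t) /\ (forall t, t > rho -> ~ phi_conv w t).

(** psi(t) = t phi'(t) / phi(t) = (sum_k k w_k t^k) / (sum_k w_k t^k). *)
Definition psi_is (w : nat -> R) (t p : R) : Prop :=
  exists a b, infinite_sum (fun k => w k * t ^ k) a /\
              infinite_sum (fun k => INR k * w k * t ^ k) b /\ p = b / a.

Definition psi_lim_left (w : nat -> R) (rho nu : R) : Prop :=
  forall eps, eps > 0 -> exists delta, delta > 0 /\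
    forall t p, 0 < t -> rho - delta < t < rho -> psi_is w t p -> Rabs (p - nu) < eps.

Definition psi_lim_infty (w : nat -> R) (nu : R) : Prop :=
  forall eps, eps > 0 -> exists M, forall t p, t > M -> psi_is w t p -> Rabs (p - nu) < eps.

(** Type II with mu = nu: rho_phi > 0 and 0 < nu < 1. *)
Definition typeII (w : nat -> R) (nu : R) : Prop :=
  0 < nu < 1 /\
  ((exists rho, 0 < rho /\ is_radius w rho /\ psi_lim_left w rho nu) \/
   ((forall t, 0 <= t -> phi_conv w t) /\ psi_lim_infty w nu)).

Definition typeIII (w : nat -> R) : Prop :=
  forall t, 0 < t -> ~ phi_conv w t.

Definition nat_to_infty (a : nat -> nat) : Prop :=
  forall M, exists N, forall n, (N <= n)%nat -> (M <= a n)%nat.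

(* Main.v *)
Require Import Defs.
From Stdlib Require Import Reals List ClassicalEpsilon Lia Lra.
Import ListNotations.
Open Scope R_scope.
Open Scope R_scope.

Fixpoint ssum (n : nat) (g : nat -> R) : R :=
  match n with O => 0 | S n' => ssum n' g + g n' end.

Lemma ssum_ext n g h : (forall i, (i < n)%nat -> g i = h i) -> ssum n g = ssum n h.
Proof. induction n; simpl; intros H; [reflexivity|]. rewrite IHn by (intros; apply H; lia). rewrite H by lia. reflexivity. Qed.

Lemma ssum_plus n g h : ssum n (fun i => g i + h i) = ssum n g + ssum n h.
Proof. induction n; simpl; [lra|]. rewrite IHn. lra. Qed.

Lemma ssum_scal n c g : ssum n (fun i => c * g i) = c * ssum n g.
Proof. induction n; simpl; [lra|]. rewrite IHn. lra. Qed.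

Lemma ssum_scalr n c g : ssum n (fun i => g i * c) = ssum n g * c.
Proof. induction n; simpl; [lra|]. rewrite IHn. lra. Qed.

Lemma ssum_zero n g : (forall i, (i < n)%nat -> g i = 0) -> ssum n g = 0.
Proof. intros H. rewrite (ssum_ext n g (fun _ => 0)) by auto. induction n; simpl; [lra|]. rewrite IHn by (intros; apply H; lia). lra. Qed.

Lemma ssum_first n g : ssum (S n) g = g 0%nat + ssum n (fun i => g (S i)).
Proof. induction n; simpl in *; [lra|]. rewrite IHn. lra. Qed.

Lemma ssum_trunc m n g : (m <= n)%nat -> (forall i, (m <= i < n)%nat -> g i = 0) -> ssum n g = ssum m g.
Proof. intros Hmn H. induction n; simpl.
 - assert (m = 0%nat) by lia. subst. reflexivity.
 - destruct (Nat.eq_dec m (S n)). subst. reflexivity.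
   rewrite IHn by (try lia; intros; apply H; lia). rewrite H by lia. lra. Qed.

Lemma ssum_swap n m f : ssum n (fun i => ssum m (fun j => f i j)) = ssum m (fun j => ssum n (fun i => f i j)).
Proof. induction n; simpl.
 - symmetry. apply ssum_zero. reflexivity.
 - rewrite IHn. rewrite <- ssum_plus. reflexivity. Qed.

Lemma ssum_diag j f : ssum (S j) (fun d => ssum (S (j - d)) (fun e => f d e)) =
  ssum (S j) (fun s => ssum (S s) (fun d => f d (s - d)%nat)).
Proof. revert f. induction j; intros f.
 - simpl. lra.
 - change (ssum (S (S j)) (fun d => ssum (S (S j - d)) (fun e => f d e))) with
     (ssum (S j) (fun d => ssum (S (S j - d)) (fun e => f d e)) + ssum (S (S j - S j)) (fun e => f (S j) e)).
   rewrite (ssum_ext (S j) _ (fun d => ssum (S (j - d)) (fun e => f d e) + f d (S j - d)%nat)).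
   2:{ intros i Hi. replace (S j - i)%nat with (S (j - i)) by lia. simpl. reflexivity. }
   rewrite ssum_plus, IHj.
   change (ssum (S (S j)) (fun s => ssum (S s) (fun d => f d (s - d)%nat))) with
     (ssum (S j) (fun s => ssum (S s) (fun d => f d (s - d)%nat)) + ssum (S (S j)) (fun d => f d (S j - d)%nat)).
   change (ssum (S (S j)) (fun d => f d (S j - d)%nat)) with (ssum (S j) (fun d => f d (S j - d)%nat) + f (S j) (S j - S j)%nat).
   rewrite Nat.sub_diag. change (ssum 1 (fun e => f (S j) e)) with (0 + f (S j) 0%nat). lra. Qed.

Lemma ssum_delta n i0 c : (i0 < n)%nat -> ssum n (fun i => if Nat.eqb i i0 then c else 0) = c.
Proof. induction n; intros H; [lia|]. simpl. destruct (Nat.eq_dec i0 n).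
 - subst. rewrite Nat.eqb_refl. rewrite ssum_zero. lra. intros i Hi. destruct (Nat.eqb_spec i n); [lia|auto].
 - rewrite IHn by lia. destruct (Nat.eqb_spec n i0); [lia|]. lra. Qed.

Lemma ssum_le n g h : (forall i, (i < n)%nat -> g i <= h i) -> ssum n g <= ssum n h.
Proof. induction n; simpl; intros H; [lra|]. specialize (IHn (fun i Hi => H i ltac:(lia))). specialize (H n ltac:(lia)). lra. Qed.

Definition lsum {A} (l : list A) (g : A -> R) : R := fold_right Rplus 0 (map g l).

Lemma lsum_nil {A} (g : A -> R) : lsum [] g = 0. Proof. reflexivity. Qed.
Lemma lsum_cons {A} x l (g : A -> R) : lsum (x :: l) g = g x + lsum l g. Proof. reflexivity. Qed.
Lemma lsum_app {A} l1 l2 (g : A -> R) : lsum (l1 ++ l2) g = lsum l1 g + lsum l2 g.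
Proof. induction l1; simpl; unfold lsum in *; simpl; [lra|]. rewrite IHl1. lra. Qed.
Lemma lsum_map {A B} (f : A -> B) l g : lsum (map f l) g = lsum l (fun x => g (f x)).
Proof. induction l; [reflexivity|]. rewrite map_cons, !lsum_cons, IHl. reflexivity. Qed.
Lemma lsum_flat_map {A B} (f : A -> list B) l g : lsum (flat_map f l) g = lsum l (fun x => lsum (f x) g).
Proof. induction l; [reflexivity|]. simpl flat_map. rewrite lsum_app, lsum_cons, IHl. reflexivity. Qed.
Lemma lsum_ext_in {A} l (g h : A -> R) : (forall x, In x l -> g x = h x) -> lsum l g = lsum l h.
Proof. induction l; intros H; [reflexivity|]. rewrite !lsum_cons, H, IHl; [reflexivity| |left; auto]. intros; apply H; right; auto. Qed.
Lemma lsum_plus {A} l (g h : A -> R) : lsum l (fun x => g x + h x) = lsum l g + lsum l h.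
Proof. induction l; [unfold lsum; simpl; lra|]. rewrite !lsum_cons, IHl. lra. Qed.
Lemma lsum_scal {A} l c (g : A -> R) : lsum l (fun x => c * g x) = c * lsum l g.
Proof. induction l; [unfold lsum; simpl; lra|]. rewrite !lsum_cons, IHl. lra. Qed.
Lemma lsum_ssum {A} l n (g : A -> nat -> R) : lsum l (fun x => ssum n (g x)) = ssum n (fun i => lsum l (fun x => g x i)).
Proof. induction l.
 - symmetry. apply ssum_zero. reflexivity.
 - rewrite lsum_cons, IHl. rewrite (ssum_ext n (fun i => lsum (a :: l) (fun x => g x i)) (fun i => g a i + lsum l (fun x => g x i))) by reflexivity.
   rewrite ssum_plus. reflexivity. Qed.
Lemma lsum_swap {A B} (l1 : list A) (l2 : list B) g : lsum l1 (fun x => lsum l2 (fun y => g x y)) = lsum l2 (fun y => lsum l1 (fun x => g x y)).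
Proof. induction l1.
 - induction l2; [reflexivity|]. rewrite lsum_cons, <- IHl2. unfold lsum; simpl; lra.
 - rewrite lsum_cons, IHl1. rewrite <- lsum_plus. reflexivity. Qed.
Lemma lsum_le {A} l (g h : A -> R) : (forall x, In x l -> g x <= h x) -> lsum l g <= lsum l h.
Proof. induction l; intros H; [unfold lsum; simpl; lra|]. rewrite !lsum_cons. 
 assert (g a <= h a) by (apply H; left; auto). assert (lsum l g <= lsum l h) by (apply IHl; intros; apply H; right; auto). lra. Qed.
Lemma lsum_nonneg {A} l (g : A -> R) : (forall x, In x l -> 0 <= g x) -> 0 <= lsum l g.
Proof. intros H. replace 0 with (lsum l (fun _ => 0)). apply lsum_le; auto.
 induction l; [reflexivity|]. rewrite lsum_cons, IHl; [lra|]. intros; apply H; right; auto. Qed.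
Lemma lsum_ge_elem {A} l (g : A -> R) x : In x l -> (forall y, In y l -> 0 <= g y) -> g x <= lsum l g.
Proof. induction l; intros Hx H; [destruct Hx|]. rewrite lsum_cons. destruct Hx as [<-|Hx].
 - assert (0 <= lsum l g) by (apply lsum_nonneg; intros; apply H; right; auto). lra.
 - assert (0 <= g a) by (apply H; left; auto). assert (g x <= lsum l g) by (apply IHl; auto; intros; apply H; right; auto). lra. Qed.
Lemma lsum_seq a n g : lsum (seq a n) g = ssum n (fun i => g (a + i)%nat).
Proof. revert a. induction n; intros a; [reflexivity|]. simpl seq. rewrite lsum_cons, IHn, ssum_first.
 replace (a + 0)%nat with a by lia. f_equal. apply ssum_ext. intros. f_equal. lia. Qed.

Fixpoint fw (w : nat -> R) (l : list ptree) : R :=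
  match l with [] => 1 | u :: r => tweight w u * fw w r end.
Fixpoint fsize (l : list ptree) : nat :=
  match l with [] => 0%nat | u :: r => (tsize u + fsize r)%nat end.
Fixpoint fN (k : nat) (l : list ptree) : nat :=
  match l with [] => 0%nat | u :: r => (Ncount k u + fN k r)%nat end.

Lemma tweight_Node w ts : tweight w (Node ts) = w (length ts) * fw w ts.
Proof. simpl; f_equal; try (induction ts; simpl; [reflexivity|]; rewrite IHts; reflexivity). Qed.
Lemma tsize_Node ts : tsize (Node ts) = S (fsize ts).
Proof. simpl; f_equal; try (induction ts; simpl; [reflexivity|]; rewrite IHts; reflexivity). Qed.
Lemma Ncount_Node k ts : Ncount k (Node ts) = ((if Nat.eqb (length ts) k then 1 else 0) + fN k ts)%nat.
Proof. simpl; f_equal; try (induction ts; simpl; [reflexivity|]; rewrite IHts; reflexivity). Qed.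

Lemma flat_map_ext_in {A B} (f g : A -> list B) l : (forall x, In x l -> f x = g x) -> flat_map f l = flat_map g l.
Proof. induction l; intros H; [reflexivity|]. simpl. rewrite H by (left; auto). rewrite IHl; auto. intros; apply H; right; auto. Qed.

Lemma forests_f_SS fu m : forests_f (S fu) (S m) = flat_map (fun j =>
            flat_map (fun f1 => map (fun rest => Node f1 :: rest) (forests_f fu (S m - j)))
                     (forests_f fu (j - 1))) (seq 1 (S m)).
Proof. reflexivity. Qed.

Lemma forests_fuel_aux N : forall m, (m <= N)%nat -> forall a b, (m < a)%nat -> (m < b)%nat -> forests_f a m = forests_f b m.
Proof. induction N; intros m Hm a b Ha Hb.
 - assert (m = 0%nat) by lia. subst. destruct a, b; try lia. reflexivity.
 - destruct a, b; try lia. destruct m; [reflexivity|]. rewrite !forests_f_SS.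
   apply flat_map_ext_in. intros j Hj. apply in_seq in Hj.
   rewrite (IHN (j-1)%nat ltac:(lia) a b ltac:(lia) ltac:(lia)).
   apply flat_map_ext_in. intros f1 _. rewrite (IHN (S m - j)%nat ltac:(lia) a b ltac:(lia) ltac:(lia)). reflexivity.
Qed.

Lemma forests_fuel fu m : (m < fu)%nat -> forests_f fu m = forests m.
Proof. intros H. unfold forests. apply (forests_fuel_aux m); lia. Qed.

Lemma forests_0 : forests 0 = [ [] ].
Proof. reflexivity. Qed.

Lemma forests_S m : forests (S m) = flat_map (fun j =>
            flat_map (fun f1 => map (fun rest => Node f1 :: rest) (forests (S m - j)))
                     (forests (j - 1))) (seq 1 (S m)).
Proof. unfold forests at 1. rewrite forests_f_SS. apply flat_map_ext_in. intros j Hj. apply in_seq in Hj.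
 rewrite (forests_fuel (S m) (j-1)) by lia. apply flat_map_ext_in. intros f1 _.
 rewrite (forests_fuel (S m) (S m - j)) by lia. reflexivity. Qed.

Lemma in_forests_aux N : forall m, (m <= N)%nat -> forall f, In f (forests m) -> fsize f = m /\ (length f <= m)%nat.
Proof. induction N; intros m Hm f Hf.
 - assert (m = 0%nat) by lia. subst. rewrite forests_0 in Hf. destruct Hf as [<-|[]]. simpl. lia.
 - destruct m. rewrite forests_0 in Hf. destruct Hf as [<-|[]]. simpl. lia.
   rewrite forests_S in Hf. apply in_flat_map in Hf as [j [Hj Hf]]. apply in_seq in Hj.
   apply in_flat_map in Hf as [f1 [Hf1 Hf]]. apply in_map_iff in Hf as [rest [<- Hr]].
   destruct (IHN (j-1)%nat ltac:(lia) _ Hf1) as [E1 L1]. destruct (IHN (S m - j)%nat ltac:(lia) _ Hr) as [E2 L2].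
   change (fsize (Node f1 :: rest)) with (tsize (Node f1) + fsize rest)%nat. rewrite tsize_Node. simpl length. lia.
Qed.

Lemma in_forests m f : In f (forests m) -> fsize f = m /\ (length f <= m)%nat.
Proof. apply (in_forests_aux m). lia. Qed.

Lemma in_trees n t : In t (trees n) -> tsize t = n /\ (outdeg t < n)%nat.
Proof. destruct n; simpl; [intros []|]. intros H. apply in_map_iff in H as [f [<- Hf]].
 apply in_forests in Hf. rewrite tsize_Node. simpl. lia. Qed.

Lemma length_le_fsize l : (length l <= fsize l)%nat.
Proof. induction l; simpl; [lia|]. destruct a. rewrite tsize_Node. lia. Qed.

Lemma outdeg_lt_tsize t : (outdeg t < tsize t)%nat.
Proof. destruct t as [ts]. rewrite tsize_Node. simpl. pose proof (length_le_fsize ts). lia. Qed.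

Lemma tweight_nonneg_aux w (Hw : forall k, 0 <= w k) N : forall t, (tsize t <= N)%nat -> 0 <= tweight w t.
Proof. induction N; intros [ts] Ht; rewrite tsize_Node in Ht; [lia|]. rewrite tweight_Node.
 apply Rmult_le_pos; [apply Hw|]. assert (Hs : (fsize ts <= N)%nat) by lia. clear Ht.
 induction ts; simpl; [lra|]. simpl in Hs. apply Rmult_le_pos; [apply IHN; lia| apply IHts; lia]. Qed.

Lemma tweight_nonneg w (Hw : forall k, 0 <= w k) t : 0 <= tweight w t.
Proof. apply (tweight_nonneg_aux w Hw (tsize t)). lia. Qed.

Lemma lsum_zero {A} l (g : A -> R) : (forall x, In x l -> g x = 0) -> lsum l g = 0.
Proof. induction l; intros H; [reflexivity|]. rewrite lsum_cons, H, IHl; [lra| |left;auto]. intros; apply H; right; auto. Qed.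
Lemma lsum_scalr {A} l c (g : A -> R) : lsum l (fun x => g x * c) = lsum l g * c.
Proof. rewrite <- (Rmult_comm c). rewrite <- lsum_scal. apply lsum_ext_in. intros; lra. Qed.

Definition F w r m := lsum (forests m) (fun f => if Nat.eqb (length f) r then fw w f else 0).
Definition A w k r m := lsum (forests m) (fun f => if Nat.eqb (length f) r then fw w f * INR (fN k f) else 0).
Definition T w j := match j with O => 0 | S j' => lsum (forests j') (fun f => w (length f) * fw w f) end.
Definition TA w k j := match j with O => 0 | S j' =>
  lsum (forests j') (fun f => w (length f) * fw w f * (INR (if Nat.eqb (length f) k then 1%nat else 0%nat) + INR (fN k f))) end.

Lemma lsum_forests_S m g : lsum (forests (S m)) g =
  ssum (S m) (fun i => lsum (forests i) (fun f1 => lsum (forests (m - i)) (fun rest => g (Node f1 :: rest)))).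
Proof. rewrite forests_S, lsum_flat_map, lsum_seq. apply ssum_ext. intros i Hi.
 replace (1 + i - 1)%nat with i by lia. replace (S m - (1 + i))%nat with (m - i)%nat by lia.
 rewrite lsum_flat_map. apply lsum_ext_in. intros. rewrite lsum_map. reflexivity. Qed.

Lemma fw_cons w f1 rest : fw w (Node f1 :: rest) = w (length f1) * fw w f1 * fw w rest.
Proof. change (fw w (Node f1 :: rest)) with (tweight w (Node f1) * fw w rest). rewrite tweight_Node. reflexivity. Qed.
Lemma fN_cons k f1 rest : fN k (Node f1 :: rest) = ((if Nat.eqb (length f1) k then 1 else 0) + fN k f1 + fN k rest)%nat.
Proof. change (fN k (Node f1 :: rest)) with (Ncount k (Node f1) + fN k rest)%nat. rewrite Ncount_Node. lia. Qed.

Lemma F_rec w r m : F w (S r) m = ssum (S m) (fun j => T w j * F w r (m - j)).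
Proof. destruct m.
 - unfold F. rewrite forests_0. simpl. unfold lsum. simpl. lra.
 - unfold F at 1. rewrite lsum_forests_S. rewrite (ssum_first (S m) (fun j => T w j * F w r (S m - j))).
   replace (T w 0) with 0 by reflexivity. rewrite Rmult_0_l, Rplus_0_l. apply ssum_ext. intros i Hi. simpl (S m - S i)%nat.
   rewrite (lsum_ext_in _ _ (fun f1 => (w (length f1) * fw w f1) * F w r (m - i))).
   + rewrite lsum_scalr. reflexivity.
   + intros f1 _. unfold F. rewrite <- lsum_scal. apply lsum_ext_in. intros rest _.
     change (length (Node f1 :: rest)) with (S (length rest)). simpl Nat.eqb. rewrite fw_cons.
     destruct (Nat.eqb (length rest) r); lra.
Qed.

Lemma A_rec w k r m : A w k (S r) m = ssum (S m) (fun j => TA w k j * F w r (m - j) + T w j * A w k r (m - j)).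
Proof. destruct m.
 - unfold A. rewrite forests_0. simpl. unfold lsum. simpl. lra.
 - unfold A at 1. rewrite lsum_forests_S.
   rewrite (ssum_first (S m) (fun j => TA w k j * F w r (S m - j) + T w j * A w k r (S m - j))).
   replace (T w 0) with 0 by reflexivity. replace (TA w k 0) with 0 by reflexivity.
   rewrite !Rmult_0_l, !Rplus_0_l. apply ssum_ext. intros i Hi. simpl (S m - S i)%nat.
   rewrite (lsum_ext_in _ _ (fun f1 => (w (length f1) * fw w f1 * (INR (if Nat.eqb (length f1) k then 1%nat else 0%nat) + INR (fN k f1))) * F w r (m - i)
        + (w (length f1) * fw w f1) * A w k r (m - i))).
   + rewrite lsum_plus, lsum_scalr, lsum_scalr. reflexivity.
   + intros f1 _. unfold F, A. rewrite <- !lsum_scal. rewrite <- lsum_plus. apply lsum_ext_in. intros rest _.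
     change (length (Node f1 :: rest)) with (S (length rest)). simpl Nat.eqb. rewrite fw_cons, fN_cons.
     rewrite !plus_INR. destruct (Nat.eqb (length rest) r); lra.
Qed.

Lemma F_0 w m : F w 0 m = if Nat.eqb m 0 then 1 else 0.
Proof. destruct m.
 - unfold F. rewrite forests_0. unfold lsum. simpl. lra.
 - unfold F. rewrite lsum_forests_S. simpl Nat.eqb. apply ssum_zero. intros i _.
   apply lsum_zero. intros f1 _. apply lsum_zero. intros rest _. reflexivity. Qed.

Lemma A_0 w k m : A w k 0 m = 0.
Proof. destruct m.
 - unfold A. rewrite forests_0. unfold lsum. simpl. lra.
 - unfold A. rewrite lsum_forests_S. apply ssum_zero. intros i _.
   apply lsum_zero. intros f1 _. apply lsum_zero. intros rest _. reflexivity. Qed.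

Lemma A_r0 w k r : A w k r 0 = 0.
Proof. unfold A. rewrite forests_0. unfold lsum. simpl. destruct r; simpl; lra. Qed.

Lemma ssum_pick n l c : (l < n)%nat -> ssum n (fun d => if Nat.eqb l d then c else 0) = c.
Proof. intros H. transitivity (ssum n (fun i => if Nat.eqb i l then c else 0)); [|apply ssum_delta; auto].
 apply ssum_ext. intros i _. rewrite Nat.eqb_sym. reflexivity. Qed.

Lemma T_S w j J : (j <= J)%nat -> T w (S j) = ssum (S J) (fun d => w d * F w d j).
Proof. intros HJ. simpl T. unfold F.
 rewrite (ssum_ext _ _ (fun d => lsum (forests j) (fun f => w d * (if Nat.eqb (length f) d then fw w f else 0))))
   by (intros; rewrite lsum_scal; reflexivity).
 rewrite <- lsum_ssum. apply lsum_ext_in. intros f Hf. apply in_forests in Hf as [_ Hl].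
 rewrite (ssum_ext _ _ (fun d => if Nat.eqb (length f) d then w (length f) * fw w f else 0)).
 - rewrite ssum_pick; [reflexivity|lia].
 - intros d _. destruct (Nat.eqb_spec (length f) d); [subst; reflexivity|lra]. Qed.

Lemma TA_S w k j J : (j <= J)%nat -> TA w k (S j) = w k * F w k j + ssum (S J) (fun d => w d * A w k d j).
Proof. intros HJ. simpl TA. unfold F, A.
 rewrite (ssum_ext _ _ (fun d => lsum (forests j) (fun f => w d * (if Nat.eqb (length f) d then fw w f * INR (fN k f) else 0))))
   by (intros; rewrite lsum_scal; reflexivity).
 rewrite <- lsum_ssum, <- lsum_scal, <- lsum_plus. apply lsum_ext_in. intros f Hf. apply in_forests in Hf as [_ Hl].
 rewrite (ssum_ext _ _ (fun d => if Nat.eqb (length f) d then w (length f) * (fw w f * INR (fN k f)) else 0)).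
 - rewrite ssum_pick by lia. destruct (Nat.eqb_spec (length f) k); simpl INR; subst; lra.
 - intros d _. destruct (Nat.eqb_spec (length f) d); [subst; reflexivity|lra]. Qed.

Lemma F_conv w a b m : F w (a + b) m = ssum (S m) (fun i => F w a i * F w b (m - i)).
Proof. revert m. induction a as [|a IH]; intros m.
 - simpl (0 + b)%nat. rewrite ssum_first. rewrite ssum_zero.
   + rewrite F_0. simpl. rewrite Nat.sub_0_r. lra.
   + intros i _. rewrite F_0. simpl. lra.
 - simpl (S a + b)%nat. rewrite !F_rec.
   rewrite (ssum_ext _ _ (fun j => ssum (S (m - j)) (fun i => T w j * (F w a i * F w b (m - j - i)))))
     by (intros j _; rewrite IH, ssum_scal; reflexivity).
   rewrite ssum_diag.
   rewrite (ssum_ext (S m) (fun i => F w (S a) i * F w b (m - i)) (fun s => ssum (S s) (fun j => T w j * F w a (s - j) * F w b (m - s))))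
     by (intros s _; rewrite F_rec, ssum_scalr; reflexivity).
   apply ssum_ext. intros s Hs. apply ssum_ext. intros j Hj. replace (m - j - (s - j))%nat with (m - s)%nat by lia. ring.
Qed.

Lemma A_conv w k a b m : A w k (a + b) m = ssum (S m) (fun i => A w k a i * F w b (m - i) + F w a i * A w k b (m - i)).
Proof. revert m. induction a as [|a IH]; intros m.
 - simpl (0 + b)%nat. rewrite ssum_first. rewrite ssum_zero.
   + rewrite F_0, A_0. simpl. rewrite Nat.sub_0_r. lra.
   + intros i _. rewrite F_0, A_0. simpl. lra.
 - simpl (S a + b)%nat. rewrite A_rec.
   rewrite (ssum_ext _ _ (fun j => ssum (S (m - j)) (fun i => TA w k j * (F w a i * F w b (m - j - i))
        + T w j * (A w k a i * F w b (m - j - i) + F w a i * A w k b (m - j - i)))))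
     by (intros j _; rewrite IH, F_conv; symmetry; rewrite ssum_plus, !ssum_scal, ssum_plus; reflexivity).
   rewrite ssum_diag.
   apply ssum_ext. intros s Hs. rewrite A_rec, F_rec, <- !ssum_scalr, <- ssum_plus.
   apply ssum_ext. intros j Hj. replace (m - j - (s - j))%nat with (m - s)%nat by lia. ring.
Qed.

Lemma F_shift w r m : F w (S r) (S m) = ssum (S m) (fun d => w d * F w (d + r) m).
Proof. rewrite F_rec. rewrite (ssum_first (S m) (fun j => T w j * F w r (S m - j))).
 replace (T w 0) with 0 by reflexivity. rewrite Rmult_0_l, Rplus_0_l.
 rewrite (ssum_ext (S m) _ (fun j => ssum (S m) (fun d => w d * F w d j * F w r (m - j)))).
 2:{ intros j Hj. rewrite (T_S w j m) by lia. rewrite ssum_scalr. reflexivity. }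
 rewrite ssum_swap. apply ssum_ext. intros d _. rewrite F_conv, <- ssum_scal. apply ssum_ext. intros; ring. Qed.

Lemma A_shift w k r m : A w k (S r) (S m) = w k * F w (k + r) m + ssum (S m) (fun d => w d * A w k (d + r) m).
Proof. rewrite A_rec. rewrite (ssum_first (S m) (fun j => TA w k j * F w r (S m - j) + T w j * A w k r (S m - j))).
 replace (T w 0) with 0 by reflexivity. replace (TA w k 0) with 0 by reflexivity. rewrite !Rmult_0_l, !Rplus_0_l.
 rewrite (ssum_ext (S m) _ (fun j => w k * (F w k j * F w r (m - j)) +
     ssum (S m) (fun d => w d * (A w k d j * F w r (m - j) + F w d j * A w k r (m - j))))).
 2:{ intros j Hj. simpl (S m - S j)%nat. rewrite (T_S w j m), (TA_S w k j m) by lia.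
     rewrite Rmult_plus_distr_r, <- !ssum_scalr, Rplus_assoc, <- ssum_plus. f_equal; [ring|]. apply ssum_ext; intros; ring. }
 rewrite ssum_plus, ssum_scal, <- F_conv, ssum_swap. f_equal. apply ssum_ext. intros d _.
 rewrite ssum_scal, <- A_conv. reflexivity. Qed.

Lemma F_van w r m : (m < r)%nat -> F w r m = 0.
Proof. intros H. unfold F. apply lsum_zero. intros f Hf. apply in_forests in Hf as [_ Hl].
 destruct (Nat.eqb_spec (length f) r); [lia|reflexivity]. Qed.

Lemma A_van w k m : forall r, (m < r + k)%nat -> A w k r m = 0.
Proof. induction m; intros r H.
 - apply A_r0.
 - destruct r. apply A_0. rewrite A_shift. rewrite F_van by lia. rewrite ssum_zero. lra.
   intros d _. rewrite IHm by lia. lra. Qed.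

Fixpoint V (w : nat -> R) (n j : nat) : R :=
  match n with O => if Nat.eqb j 0 then 1 else 0
  | S n' => ssum (S j) (fun d => w d * V w n' (j - d)) end.

Lemma ssum_rev n h : ssum n h = ssum n (fun i => h (n - 1 - i)%nat).
Proof. induction n; [reflexivity|]. rewrite (ssum_first n (fun i => h (S n - 1 - i)%nat)).
 change (ssum (S n) h) with (ssum n h + h n). rewrite IHn. rewrite Rplus_comm.
 replace (S n - 1 - 0)%nat with n by lia. f_equal. apply ssum_ext. intros. f_equal. lia. Qed.

Lemma ssum_tswap j f : ssum (S j) (fun d => ssum (S (j - d)) (fun e => f d e)) =
  ssum (S j) (fun e => ssum (S (j - e)) (fun d => f d e)).
Proof. rewrite ssum_diag. rewrite (ssum_diag j (fun e d => f d e)). apply ssum_ext. intros s Hs.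
 rewrite ssum_rev. apply ssum_ext. intros i Hi. f_equal; lia. Qed.

Lemma V_deriv w n j : INR j * V w (S n) j = INR (S n) * ssum (S j) (fun d => INR d * w d * V w n (j - d)).
Proof. revert j. induction n; intros j.
 - change (V w 1 j) with (ssum (S j) (fun d => w d * V w 0 (j - d))). rewrite <- ssum_scal.
   replace (INR 1) with 1 by reflexivity. rewrite Rmult_1_l. apply ssum_ext. intros d Hd. simpl V.
   destruct (Nat.eqb_spec (j - d) 0); [|lra]. replace d with j by lia. ring.
 - change (V w (S (S n)) j) with (ssum (S j) (fun d => w d * V w (S n) (j - d))).
   rewrite <- ssum_scal.
   rewrite (ssum_ext _ _ (fun d => INR d * w d * V w (S n) (j - d) + w d * (INR (j - d) * V w (S n) (j - d)))).
   2:{ intros d Hd. rewrite minus_INR by lia. ring. }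
   rewrite ssum_plus.
   rewrite (ssum_ext _ (fun d => w d * (INR (j - d) * V w (S n) (j - d)))
      (fun d => INR (S n) * ssum (S (j - d)) (fun e => w d * (INR e * w e * V w n (j - d - e))))).
   2:{ intros d Hd. rewrite IHn, <- ssum_scal, <- ssum_scal, <- ssum_scal. apply ssum_ext; intros; ring. }
   rewrite ssum_scal, ssum_tswap.
   rewrite (ssum_ext _ (fun e => ssum (S (j - e)) (fun d => w d * (INR e * w e * V w n (j - d - e))))
      (fun e => INR e * w e * V w (S n) (j - e))).
   2:{ intros e He. change (V w (S n) (j - e)) with (ssum (S (j - e)) (fun d => w d * V w n (j - e - d))).
       rewrite <- ssum_scal. apply ssum_ext. intros d Hd. replace (j - d - e)%nat with (j - e - d)%nat by lia. ring. }
   rewrite (S_INR (S n)). ring.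
Qed.

Lemma F_formula w m : forall r, (r <= m)%nat -> INR m * F w r m = INR r * V w m (m - r).
Proof. induction m; intros r Hr.
 - assert (r = 0%nat) by lia. subst. simpl. lra.
 - destruct r as [|r'].
   + rewrite F_0. simpl (Nat.eqb (S m) 0). simpl INR at 2. lra.
   + rewrite F_shift. simpl (S m - S r')%nat. destruct (Nat.eq_dec m 0) as [Hm|Hm].
     * subst. assert (r' = 0%nat) by lia. subst. simpl. rewrite F_0. simpl. lra.
     * set (J := (m - r')%nat).
       assert (C1 : INR m * ssum (S m) (fun d => w d * F w (d + r') m) =
         ssum (S J) (fun d => INR d * w d * V w m (J - d)) + INR r' * ssum (S J) (fun d => w d * V w m (J - d))).
       { rewrite <- ssum_scal. rewrite (ssum_trunc (S J) (S m)).
         - rewrite <- ssum_scal, <- ssum_plus. apply ssum_ext. intros d Hd.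
           rewrite Rmult_comm, Rmult_assoc, (Rmult_comm _ (INR m)), IHm by lia.
           replace (m - (d + r'))%nat with (J - d)%nat by (unfold J; lia). rewrite plus_INR. ring.
         - unfold J; lia.
         - intros d Hd. rewrite F_van by (unfold J in Hd; lia). ring. }
       apply (Rmult_eq_reg_l (INR m)); [|apply not_0_INR; auto].
       transitivity (INR (S m) * (INR m * ssum (S m) (fun d => w d * F w (d + r') m))); [ring|].
       rewrite C1, Rmult_plus_distr_l, <- V_deriv.
       change (ssum (S J) (fun d => w d * V w m (J - d))) with (V w (S m) J).
       unfold J. rewrite minus_INR by lia. rewrite !S_INR. ring.
Qed.

Lemma A_formula w k m : forall r, (r + k <= S m)%nat -> A w k r (S m) = INR r * w k * V w m (S m - r - k).
Proof. induction m; intros r Hr.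
 - destruct r as [|r']. rewrite A_0. simpl. lra.
   assert (r' = 0%nat /\ k = 0%nat) as [-> ->] by lia. rewrite A_shift. simpl. rewrite F_0, A_r0. simpl. lra.
 - destruct r as [|r']. rewrite A_0. simpl INR. lra.
   rewrite A_shift. set (m0 := S m). set (J := (S m0 - S r' - k)%nat).
   assert (C1 : INR m0 * ssum (S m0) (fun d => w d * A w k (d + r') m0) =
     w k * (INR m0 * ssum (S J) (fun d => INR d * w d * V w m (J - d))) + w k * (INR m0 * INR r' * ssum (S J) (fun d => w d * V w m (J - d)))).
   { rewrite (ssum_trunc (S J) (S m0)).
     - rewrite <- !ssum_scal, <- ssum_plus. apply ssum_ext. intros d Hd. unfold m0.
       rewrite IHm by (unfold J in Hd; lia).
       replace (S m - (d + r') - k)%nat with (J - d)%nat by (unfold J; lia). rewrite plus_INR. ring.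
     - unfold J; lia.
     - intros d Hd. rewrite A_van by (unfold J in Hd; lia). ring. }
   apply (Rmult_eq_reg_l (INR m0)); [|apply not_0_INR; unfold m0; lia].
   rewrite Rmult_plus_distr_l. rewrite C1.
   transitivity (w k * (INR m0 * F w (k + r') m0) + w k * (INR m0 * ssum (S J) (fun d => INR d * w d * V w m (J - d))) +
      w k * (INR m0 * INR r' * ssum (S J) (fun d => w d * V w m (J - d)))); [ring|].
   rewrite F_formula by (unfold m0; lia).
   unfold m0. rewrite <- V_deriv. fold m0.
   change (ssum (S J) (fun d => w d * V w m (J - d))) with (V w m0 J).
   replace (m0 - (k + r'))%nat with J by (unfold J, m0; lia).
   assert (HJ : INR J = INR m0 - INR r' - INR k).
   { unfold J. rewrite !minus_INR by (unfold m0 in *; lia). rewrite !S_INR. lra. }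
   replace (S m0 - S r' - k)%nat with J by (unfold J; lia).
   rewrite HJ, plus_INR, !S_INR. ring.
Qed.

Lemma TS_N w k m : lsum (trees (S m)) (fun t => tweight w t * INR (Ncount k t)) = TA w k (S m).
Proof. change (trees (S m)) with (map Node (forests m)). rewrite lsum_map. simpl TA.
 apply lsum_ext_in. intros f _. rewrite tweight_Node, Ncount_Node, plus_INR. reflexivity. Qed.

Lemma TS_D w k m : lsum (trees (S m)) (fun t => tweight w t * (if Nat.eqb (outdeg t) k then 1 else 0)) = w k * F w k m.
Proof. change (trees (S m)) with (map Node (forests m)). rewrite lsum_map. unfold F. rewrite <- lsum_scal.
 apply lsum_ext_in. intros f _. rewrite tweight_Node. simpl outdeg.
 destruct (Nat.eqb_spec (length f) k); [subst|]; lra. Qed.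

Lemma TA_closed w k m : (k <= S m)%nat -> TA w k (S (S m)) = w k * V w (S m) (S m - k).
Proof. intros Hk. rewrite (TA_S w k (S m) (S m)) by lia.
 apply (Rmult_eq_reg_l (INR (S m))); [|apply not_0_INR; lia].
 rewrite Rmult_plus_distr_l.
 rewrite (ssum_trunc (S (S m - k)) (S (S m))) by (try lia; intros d Hd; rewrite A_van by lia; ring).
 rewrite (ssum_ext _ _ (fun d => w k * (INR d * w d * V w m (S m - k - d)))).
 2:{ intros d Hd. rewrite A_formula by lia. replace (S m - d - k)%nat with (S m - k - d)%nat by lia. ring. }
 rewrite ssum_scal.
 transitivity (w k * (INR (S m) * F w k (S m)) + w k * (INR (S m) * ssum (S (S m - k)) (fun d => INR d * w d * V w m (S m - k - d)))); [ring|].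
 rewrite <- V_deriv, F_formula by lia. rewrite minus_INR by lia. ring. Qed.

Lemma key_k w k m : INR k * lsum (trees (S m)) (fun t => tweight w t * INR (Ncount k t)) =
  INR m * lsum (trees (S m)) (fun t => tweight w t * (if Nat.eqb (outdeg t) k then 1 else 0)).
Proof. rewrite TS_N, TS_D. destruct (Compare_dec.le_lt_dec k m) as [Hk|Hk].
 - destruct m as [|m].
   + assert (k = 0%nat) by lia. subst. simpl. lra.
   + rewrite TA_closed by lia.
     transitivity (w k * (INR (S m) * F w k (S m))); [|ring].
     rewrite F_formula by lia. ring.
 - rewrite (TA_S w k m m) by lia. rewrite F_van by lia. rewrite ssum_zero. lra.
   intros d _. rewrite A_van by lia. ring. Qed.

Lemma indicator_seq D K m : (D < S m)%nat ->
  lsum (seq (S K) (S m)) (fun k => if Nat.eqb D k then 1 else 0) = if excluded_middle_informative (D > K)%nat then 1 else 0.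
Proof. intros HD. rewrite lsum_seq. destruct (excluded_middle_informative (D > K)%nat) as [H|H].
 - transitivity (ssum (S m) (fun i => if Nat.eqb i (D - S K) then 1 else 0)); [|apply ssum_delta; lia].
   apply ssum_ext. intros i Hi. destruct (Nat.eqb_spec D (S K + i)), (Nat.eqb_spec i (D - S K)); try lia; reflexivity.
 - apply ssum_zero. intros i _. destruct (Nat.eqb_spec D (S K + i)); [lia|reflexivity]. Qed.

Lemma KEY w K m : INR m * Wsum w (S m) (fun t => (outdeg t > K)%nat) = lsum (trees (S m)) (fun t => tweight w t * high_sum K t).
Proof.
 rewrite (lsum_ext_in _ (fun t => tweight w t * high_sum K t)
    (fun t => lsum (seq (S K) (S m)) (fun k => tweight w t * (INR k * INR (Ncount k t))))).
 2:{ intros t Ht. apply in_trees in Ht as [Hs _]. unfold high_sum. rewrite Hs. rewrite lsum_scal. reflexivity. }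
 rewrite lsum_swap.
 rewrite (lsum_ext_in _ _ (fun k => INR m * lsum (trees (S m)) (fun t => tweight w t * (if Nat.eqb (outdeg t) k then 1 else 0)))).
 2:{ intros k _. rewrite <- key_k, <- lsum_scal. apply lsum_ext_in. intros; ring. }
 rewrite lsum_scal. f_equal. rewrite <- lsum_swap. unfold Wsum. fold (lsum (trees (S m)) (fun t => if excluded_middle_informative (outdeg t > K)%nat then tweight w t else 0)).
 apply lsum_ext_in. intros t Ht. apply in_trees in Ht as [_ Hd].
 rewrite lsum_scal, indicator_seq by lia. destruct (excluded_middle_informative _); lra. Qed.

Lemma Wsum_eq w n P : Wsum w n P = lsum (trees n) (fun t => if excluded_middle_informative (P t) then tweight w t else 0).
Proof. reflexivity. Qed.

Lemma Wsum_le w n (P Q : ptree -> Prop) : (forall k, 0 <= w k) -> (forall t, P t -> Q t) -> Wsum w n P <= Wsum w n Q.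
Proof. intros Hw H. rewrite !Wsum_eq. apply lsum_le. intros t _. pose proof (tweight_nonneg w Hw t).
 destruct (excluded_middle_informative (P t)), (excluded_middle_informative (Q t)); try lra. exfalso; auto. Qed.

Lemma Wsum_nonneg w n P : (forall k, 0 <= w k) -> 0 <= Wsum w n P.
Proof. intros Hw. rewrite Wsum_eq. apply lsum_nonneg. intros t _. pose proof (tweight_nonneg w Hw t).
 destruct (excluded_middle_informative (P t)); lra. Qed.

Lemma Wsum_compl w n P : Wsum w n P + Wsum w n (fun t => ~ P t) = Wsum w n (fun _ => True).
Proof. rewrite !Wsum_eq, <- lsum_plus. apply lsum_ext_in. intros t _.
 destruct (excluded_middle_informative (P t)), (excluded_middle_informative (~ P t)), (excluded_middle_informative True); tauto || lra. Qed.

Lemma high_nonneg K t : 0 <= high_sum K t.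
Proof. unfold high_sum. change (0 <= lsum (seq (S K) (tsize t)) (fun k => INR k * INR (Ncount k t))).
 apply lsum_nonneg. intros. apply Rmult_le_pos; apply pos_INR. Qed.

Lemma high_ge_deg K t : (outdeg t > K)%nat -> INR (outdeg t) <= high_sum K t.
Proof. intros H. unfold high_sum. change (INR (outdeg t) <= lsum (seq (S K) (tsize t)) (fun k => INR k * INR (Ncount k t))).
 eapply Rle_trans; [|apply (lsum_ge_elem _ _ (outdeg t))].
 - destruct t as [ts]. simpl outdeg. rewrite Ncount_Node, Nat.eqb_refl.
   rewrite <- (Rmult_1_r (INR (length ts))) at 1. apply Rmult_le_compat_l; [apply pos_INR|].
   apply (le_INR 1). lia.
 - apply in_seq. pose proof (outdeg_lt_tsize t). lia.
 - intros. apply Rmult_le_pos; apply pos_INR. Qed.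

Lemma ML (w : nat -> R) (mu : R) (Omega : nat -> nat) :
  (forall k, 0 <= w k) -> mu < 1 -> nat_to_infty Omega ->
  (forall K : nat -> nat, nat_to_infty K -> (forall n, (K n <= Omega n)%nat) ->
     forall eps delta, eps > 0 -> delta > 0 -> exists N, forall n, (N <= n)%nat ->
       Wsum w n (fun t => Rabs (low_sum (K n) t - mu * INR n) > eps * INR n)
         <= delta * Wsum w n (fun _ => True) /\
       Wsum w n (fun t => Rabs (high_sum (K n) t - (1 - mu) * INR n) > eps * INR n)
         <= delta * Wsum w n (fun _ => True)) ->
  forall eps delta, eps > 0 -> delta > 0 -> exists N, forall n, (N <= n)%nat ->
      Wsum w n (fun t => (outdeg t > Omega n)%nat /\ INR (outdeg t) > (1 - mu + eps) * INR n)
        <= delta * Wsum w n (fun t => (outdeg t > Omega n)%nat).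
Proof.
 intros Hw Hmu HOm Hyp eps delta Heps Hdelta.
 set (e' := Rmin eps ((1 - mu) / 2)). set (d' := Rmin (1/2) (delta * (1 - mu) / 4)).
 assert (He' : e' > 0) by (apply Rmin_pos; lra).
 assert (Hd' : d' > 0) by (apply Rmin_pos; [lra|]; apply Rmult_lt_0_compat; [apply Rmult_lt_0_compat|]; lra).
 assert (He1 : e' <= eps) by apply Rmin_l. assert (He2 : e' <= (1 - mu) / 2) by apply Rmin_r.
 assert (Hd1 : d' <= 1/2) by apply Rmin_l. assert (Hd2 : d' <= delta * (1 - mu) / 4) by apply Rmin_r.
 destruct (Hyp Omega HOm (fun n => le_n _) e' d' He' Hd') as [N HN].
 exists (Nat.max N 2). intros n Hn. destruct (HN n ltac:(lia)) as [_ Hbad].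
 destruct n as [|m]; [lia|].
 set (bad := fun t => Rabs (high_sum (Omega (S m)) t - (1 - mu) * INR (S m)) > e' * INR (S m)).
 fold bad in Hbad.
 set (W := Wsum w (S m) (fun _ => True)). fold W in Hbad.
 set (WD := Wsum w (S m) (fun t => (outdeg t > Omega (S m))%nat)).
 assert (HnR : INR (S m) > 0) by (apply lt_0_INR; lia).
 assert (HmR : INR m > 0) by (apply lt_0_INR; lia).
 assert (HSm : INR (S m) = INR m + 1) by apply S_INR.
 assert (Ha : Wsum w (S m) (fun t => (outdeg t > Omega (S m))%nat /\ INR (outdeg t) > (1 - mu + eps) * INR (S m)) <= Wsum w (S m) bad).
 { apply Wsum_le; auto. intros t [H1 H2]. unfold bad. pose proof (high_ge_deg _ _ H1).
   apply Rlt_le_trans with (high_sum (Omega (S m)) t - (1 - mu) * INR (S m)); [|apply Rle_abs].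
   assert (e' * INR (S m) <= eps * INR (S m)) by (apply Rmult_le_compat_r; lra). lra. }
 assert (HW0 : 0 <= W) by (apply Wsum_nonneg; auto).
 assert (Hc : Wsum w (S m) bad + Wsum w (S m) (fun t => ~ bad t) = W) by apply Wsum_compl.
 set (c := (1 - mu - e') * INR (S m)).
 assert (Hcpos : (1 - mu) / 2 * INR (S m) <= c) by (unfold c; apply Rmult_le_compat_r; lra).
 assert (Hlow : c * Wsum w (S m) (fun t => ~ bad t) <= INR m * WD).
 { unfold WD. rewrite KEY, Wsum_eq, <- lsum_scal. apply lsum_le. intros t _.
   pose proof (tweight_nonneg w Hw t). pose proof (high_nonneg (Omega (S m)) t).
   destruct (excluded_middle_informative (~ bad t)) as [Hg|Hg].
   - unfold bad in Hg. apply Rnot_gt_le in Hg.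
     pose proof (Rle_abs (- (high_sum (Omega (S m)) t - (1 - mu) * INR (S m)))) as Hab. rewrite Rabs_Ropp in Hab.
     rewrite Rmult_comm. apply Rmult_le_compat_l; auto. unfold c. lra.
   - rewrite Rmult_0_r. apply Rmult_le_pos; auto. }
 assert (HWD : (1 - mu) / 4 * W <= WD).
 { apply (Rmult_le_reg_l (INR m)); auto.
   assert (Hgood : W / 2 <= Wsum w (S m) (fun t => ~ bad t)).
   { assert (d' * W <= 1/2 * W) by (apply Rmult_le_compat_r; lra). lra. }
   assert (Hgood0 : 0 <= W / 2) by lra.
   assert (Hc0 : 0 <= c) by (unfold c; apply Rmult_le_pos; lra).
   assert (c * (W / 2) <= c * Wsum w (S m) (fun t => ~ bad t)) by (apply Rmult_le_compat_l; [lra|auto]).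
   assert ((1 - mu) / 2 * INR (S m) * (W / 2) <= c * (W / 2)) by (apply Rmult_le_compat_r; auto).
   assert (INR m * W <= INR (S m) * W) by (apply Rmult_le_compat_r; lra).
   nra. }
 assert (Hfin : d' * W <= delta * ((1 - mu) / 4 * W)).
 { assert (d' * W <= delta * (1 - mu) / 4 * W) by (apply Rmult_le_compat_r; lra). lra. }
 assert (delta * ((1 - mu) / 4 * W) <= delta * WD) by (apply Rmult_le_compat_l; lra).
 lra.
Qed.

Fixpoint Mf (Nf : nat -> nat) (i : nat) : nat :=
  match i with O => Nf O | S i' => S (Nat.max (Mf Nf i') (Nf (S i'))) end.
Fixpoint gf (M : nat -> nat) (n : nat) : nat :=
  match n with O => O | S n' => if Nat.leb (M (S (gf M n'))) (S n') then S (gf M n') else gf M n' end.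

Lemma Mf_ge Nf i : (Nf i <= Mf Nf i)%nat.
Proof. destruct i; simpl; lia. Qed.
Lemma Mf_lt Nf i : (Mf Nf i < Mf Nf (S i))%nat.
Proof. simpl. lia. Qed.

Lemma gf_mono M n : (gf M n <= gf M (S n))%nat.
Proof. simpl. destruct (Nat.leb _ _); lia. Qed.
Lemma gf_inv M n : gf M n = O \/ (M (gf M n) <= n)%nat.
Proof. induction n; [left; reflexivity|]. simpl. destruct (Nat.leb_spec (M (S (gf M n))) (S n)).
 - right; auto.
 - destruct IHn as [->|IH]; [left; reflexivity|right; lia]. Qed.
Lemma gf_ge M (HM : forall i, (M i < M (S i))%nat) : forall n j, (M j <= n)%nat -> (j <= gf M n)%nat.
Proof. induction n; intros j Hj.
 - destruct j; [lia|]. specialize (HM j). lia.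
 - destruct j; [lia|]. assert (Hj' : (M j <= n)%nat) by (specialize (HM j); lia).
   specialize (IHn j Hj'). pose proof (gf_mono M n).
   destruct (Nat.eq_dec (gf M n) j) as [E|E]; [|lia].
   simpl. rewrite E. destruct (Nat.leb_spec (M (S j)) (S n)); lia. Qed.

Lemma small_inv eps : eps > 0 -> exists j0, forall j, (j0 <= j)%nat -> / INR (S j) < eps.
Proof. intros He. destruct (INR_archimed eps 1 He) as [n Hn]. exists n. intros j Hj.
 assert (HS : INR n <= INR (S j)) by (apply le_INR; lia).
 assert (HSp : 0 < INR (S j)) by (apply lt_0_INR; lia).
 assert (H1 : 1 < INR (S j) * eps) by (assert (INR n * eps <= INR (S j) * eps) by (apply Rmult_le_compat_r; lra); lra).
 apply (Rmult_lt_reg_l (INR (S j))); auto. rewrite Rinv_r by lra. lra. Qed.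

Theorem lemma6p3 (w : nat -> R) (mu : R) (Omega : nat -> nat) :
  weight_seq w ->
  (typeII w mu \/ (typeIII w /\ mu = 0)) ->
  nat_to_infty Omega ->
  (forall eps, eps > 0 -> exists N, forall n, (N <= n)%nat -> INR (Omega n) <= eps * INR n) ->
  (forall K : nat -> nat, nat_to_infty K -> (forall n, (K n <= Omega n)%nat) ->
     forall eps delta, eps > 0 -> delta > 0 -> exists N, forall n, (N <= n)%nat ->
       Wsum w n (fun t => Rabs (low_sum (K n) t - mu * INR n) > eps * INR n)
         <= delta * Wsum w n (fun _ => True) /\
       Wsum w n (fun t => Rabs (high_sum (K n) t - (1 - mu) * INR n) > eps * INR n)
         <= delta * Wsum w n (fun _ => True)) ->
  exists tn : nat -> R, Un_cv tn 0 /\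
    forall delta, delta > 0 -> exists N, forall n, (N <= n)%nat ->
      Wsum w n (fun t => (outdeg t > Omega n)%nat /\ INR (outdeg t) > (1 - mu + tn n) * INR n)
        <= delta * Wsum w n (fun t => (outdeg t > Omega n)%nat).
Proof.
 intros Hws Htype HOm _ Hyp.
 assert (Hw : forall k, 0 <= w k) by apply Hws.
 assert (Hmu : mu < 1) by (destruct Htype as [[H _]|[_ ->]]; lra).
 assert (Hpos : forall i, / INR (S i) > 0) by (intros i; apply Rinv_0_lt_compat, lt_0_INR; lia).
 assert (Hex : forall i, exists N, forall n, (N <= n)%nat ->
      Wsum w n (fun t => (outdeg t > Omega n)%nat /\ INR (outdeg t) > (1 - mu + / INR (S i)) * INR n)
        <= / INR (S i) * Wsum w n (fun t => (outdeg t > Omega n)%nat)).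
 { intros i. apply (ML w mu Omega Hw Hmu HOm Hyp); apply Hpos. }
 set (Nf := fun i => proj1_sig (constructive_indefinite_description _ (Hex i))).
 assert (HNf : forall i n, (Nf i <= n)%nat ->
      Wsum w n (fun t => (outdeg t > Omega n)%nat /\ INR (outdeg t) > (1 - mu + / INR (S i)) * INR n)
        <= / INR (S i) * Wsum w n (fun t => (outdeg t > Omega n)%nat)).
 { intros i. unfold Nf. destruct (constructive_indefinite_description _ (Hex i)) as [N HN]. exact HN. }
 set (M := Mf Nf). assert (HM : forall i, (M i < M (S i))%nat) by (intros; apply Mf_lt).
 exists (fun n => / INR (S (gf M n))). split.
 - intros eps Heps. destruct (small_inv eps Heps) as [j0 Hj0]. exists (M j0). intros n Hn.
   unfold R_dist. rewrite Rminus_0_r. rewrite Rabs_right by (left; apply Hpos).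
   apply Hj0. apply gf_ge; auto.
 - intros delta Hdelta. destruct (small_inv delta Hdelta) as [j0 Hj0]. exists (M (S j0)). intros n Hn.
   pose proof (gf_ge M HM n (S j0) Hn) as Hg.
   destruct (gf_inv M n) as [E|E]; [lia|].
   assert (Nf (gf M n) <= M (gf M n))%nat by apply Mf_ge.
   eapply Rle_trans; [apply HNf; lia|].
   apply Rmult_le_compat_r; [apply Wsum_nonneg; auto|]. left. apply Hj0. lia.
Qed.
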